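(* Let $A\in\mathbb{R}^{n\times n}$ be a range monotone $Z$-matrix with $\mathbb{R}^n_+\cap R(A)\ne\{0\}$. Then the group inverse $A^{\#}$ exists and is a Karamardian matrix.
   Context: A $Z$-matrix is a real square matrix whose off-diagonal entries are nonpositive. A square matrix $M$ is range monotone if $Mx\ge 0$ and $x\in R(M)$ imply $x\ge 0$ (range monotone matrices are group invertible). The group inverse $A^{\#}$ is the unique $X$ with $AXA=A$, $XAX=X$, $AX=XA$; $R(A^{\#})=R(A)$. For $M\in\mathbb{R}^{n\times n}$ let $K_M=\mathbb{R}^n_+\cap R(M)$ and $K_M^*=\{y\in\mathbb{R}^n: x^Ty\ge 0 \text{ for all } x\in K_M\}$ (one has $K_M^*=\mathbb{R}^n_++N(M^T)$, with interior $\{a+b: a>0,\ b\in N(M^T)\}$). For $q\in\mathbb{R}^n$, LCP$(M,K_M,q)$ is to find $x$ with $x\in K_M$, $Mx+q\in K_M^*$, $x^T(Mx+q)=0$. $M$ is a Karamardian matrix if $K_M\ne\{0\}$ and there exists $d$ in the interior of $K_M^*$ such that both LCP$(M,K_M,0)$ and LCP$(M,K_M,d)$ have $x=0$ as their only solution. *)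

(* Defs.v *)
From HB Require Import structures.
From mathcomp Require Import all_boot all_order all_algebra.
From mathcomp Require Import reals.
Set Implicit Arguments. Unset Strict Implicit. Unset Printing Implicit Defensive.
Import Order.TTheory GRing.Theory Num.Theory.
Local Open Scope ring_scope.

Section Defs.
Variable R : realType.
Variable n : nat.
Implicit Types (M X : 'M[R]_n) (x y d : 'cV[R]_n).

Definition nonneg x : Prop := forall i, 0 <= x i 0.
Definition posvec x : Prop := forall i, 0 < x i 0.

Definition Zmatrix M : Prop := forall i j, i != j -> M i j <= 0.

Definition in_range M x : Prop := exists y, x = M *m y.
Definition in_null M x : Prop := M *m x = 0.

Definition range_monotone M : Prop :=
  forall x, nonneg (M *m x) -> in_range M x -> nonneg x.

Definition group_inverse M X : Prop :=
  [/\ M *m X *m M = M, X *m M *m X = X & M *m X = X *m M].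

Definition KM M x : Prop := nonneg x /\ in_range M x.

Definition KM_dual M y : Prop := forall x, KM M x -> 0 <= (x^T *m y) 0 0.

(* interior of K_M^*, via the characterization {a + b : a > 0, b in N(M^T)} *)
Definition KM_dual_int M d : Prop :=
  exists a b, [/\ posvec a, in_null M^T b & d = a + b].

Definition LCP_sol M q x : Prop :=
  [/\ KM M x, KM_dual M (M *m x + q) & (x^T *m (M *m x + q)) 0 0 = 0].

Definition karamardian M : Prop :=
  (exists x, KM M x /\ x <> 0) /\
  exists d, [/\ KM_dual_int M d,
                (forall x, LCP_sol M 0 x -> x = 0) &
                (forall x, LCP_sol M d x -> x = 0)].

End Defs.

(* Main.v *)
Require Import Defs.
From HB Require Import structures.
From mathcomp Require Import all_boot all_order all_algebra.
From mathcomp Require Import reals.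
Import Order.TTheory GRing.Theory Num.Theory.
Local Open Scope ring_scope.

Section Aux.
Variable R : realType.
Variable n : nat.
Implicit Types (A X : 'M[R]_n).

Lemma key_inj A : range_monotone A ->
  forall x : 'cV[R]_n, in_range A x -> A *m x = 0 -> x = 0.
Proof.
move=> rm x [y ->] H.
have h1 : nonneg (A *m y).
  apply: rm; last by exists y.
  by rewrite H => i; rewrite mxE.
have h2 : nonneg (- (A *m y)).
  apply: rm; last by exists (- y); rewrite mulmxN.
  by rewrite mulmxN H oppr0 => i; rewrite mxE.
apply/matrixP => i j; rewrite (ord1 j) [RHS]mxE.
apply/eqP; rewrite eq_le h1 andbT.
by have := h2 i; rewrite mxE oppr_ge0.
Qed.

Lemma rank_sq A : range_monotone A -> \rank (A *m A) = \rank A.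
Proof.
move=> rm; rewrite -mxrank_tr -[RHS]mxrank_tr trmx_mul.
have := mxrank_mul_ker A^T A^T.
set C := (A^T :&: kermx A^T)%MS.
suff -> : C = 0 by rewrite mxrank0 addn0.
have : (C <= C)%MS by [].
rewrite sub_capmx => /andP [/submxP [D eD] /sub_kermxP eK].
apply/matrixP => i j; rewrite [RHS]mxE.
have hc : col i C^T = 0.
  apply: (@key_inj _ rm).
    exists (col i D^T); rewrite eD trmx_mul (trmxK A) !colE mulmxA //.
  rewrite colE mulmxA.
  have -> : A *m C^T = (C *m A^T)^T by rewrite trmx_mul (trmxK A).
  by rewrite eK trmx0 mul0mx.
have := congr1 (fun M : 'cV[R]_n => M j 0) hc.
by rewrite !mxE.
Qed.

Lemma gi_exists A : range_monotone A -> exists X, group_inverse A X.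
Proof.
move=> rm; have rk := @rank_sq _ rm.
have s1 : (A <= A *m A)%MS by rewrite -(mxrank_leqif_sup (submxMl A A)).2 rk.
have s2 : (A^T <= A^T *m A^T)%MS.
  by rewrite -(mxrank_leqif_sup (submxMl A^T A^T)).2 -trmx_mul !mxrank_tr rk.
set V := A *m pinvmx (A *m A).
have eV : V *m A *m A = A by rewrite -mulmxA /V mulmxKpV.
set W := (A^T *m pinvmx (A^T *m A^T))^T.
have eW : A *m A *m W = A.
  rewrite /W -[A in A *m A *m _](trmxK A) -trmx_mul -trmx_mul.
  by rewrite mulmxKpV // (trmxK A).
set G := pinvmx (A *m A *m A).
have eG : A *m A *m A *m G *m A *m A *m A = A *m A *m A.
  by have := mulmxKpV (submx_refl (A *m A *m A)); rewrite !mulmxA.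
clearbody V W G.
have eVY : forall Y : 'M[R]_n, Y *m V *m A *m A = Y *m A.
  have r : V *m (A *m A) = A by rewrite mulmxA.
  by move=> Y; rewrite -!mulmxA r.
have eWY : forall Y : 'M[R]_n, Y *m A *m A *m W = Y *m A.
  have r : A *m (A *m W) = A by rewrite mulmxA.
  by move=> Y; rewrite -!mulmxA r.
have eGY : forall Y : 'M[R]_n, Y *m A *m A *m A *m G *m A *m A *m A = Y *m A *m A *m A.
  have r : A *m (A *m (A *m (G *m (A *m (A *m A))))) = A *m (A *m A) by rewrite !mulmxA.
  by move=> Y; rewrite -!mulmxA r.
have eV2 : V *m V *m A *m A *m A = A by rewrite eVY eV.
have eW2Y : forall Y : 'M[R]_n, Y *m A *m A *m A *m W *m W = Y *m A.
  by move=> Y; rewrite eWY eWY.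
exists (A *m G *m A); split; rewrite !mulmxA.
- rewrite -{1}eV -(eWY (V *m A *m A *m A *m G *m A)) eGY eWY; exact: eV.
- by rewrite -(eW2Y (A *m G *m A *m A *m A *m G)) eGY eW2Y.
- rewrite -{1}eV -(eW2Y (V *m A *m A *m A *m G)) eGY eW2Y.
  rewrite -{2}eV2 -(eWY (V *m V *m A *m A *m A *m G *m A)) eGY eWY.
  by rewrite eVY.
Qed.

Lemma X_pos A X : range_monotone A -> group_inverse A X ->
  forall x, KM X x -> nonneg (X *m x) /\ x = A *m (X *m x).
Proof.
move=> rm [h1 h2 h3] x [xp [z ez]]; subst x.
have ex : A *m (X *m (X *m z)) = X *m z.
  by rewrite !mulmxA h3 h2.
split; last by rewrite ex.
apply: rm; first by rewrite ex.
exists (X *m (X *m (X *m z))).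
by rewrite !mulmxA h3 h2.
Qed.

Lemma dot_sum (x v : 'cV[R]_n) : (x^T *m v) 0 0 = \sum_i x i 0 * v i 0.
Proof. by rewrite !mxE; apply: eq_bigr => i _; rewrite mxE. Qed.

Lemma lcp_zero A X (q : 'cV[R]_n) : Zmatrix A -> range_monotone A ->
  group_inverse A X -> nonneg q -> forall x, LCP_sol X q x -> x = 0.
Proof.
move=> zA rm gi qp x [kx _ hc].
have [yp ex] := X_pos _ _ rm gi _ kx.
set y := X *m x in yp ex.
have xp : nonneg x by case: kx.
rewrite dot_sum in hc.
have hterm : forall i, x i 0 * y i 0 = 0.
  move=> i.
  have ge0 : forall j, 0 <= x j 0 * (X *m x + q) j 0.
    by move=> j; rewrite mxE; apply: mulr_ge0 => //; apply: addr_ge0.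
  have := (psumr_eq0P (fun j _ => ge0 j) hc) i isT.
  rewrite mxE mulrDr => /eqP; rewrite paddr_eq0 ?mulr_ge0 //.
  by case/andP => /eqP.
apply/matrixP => i j; rewrite (ord1 j) [RHS]mxE.
have [yi0|yin0] := eqVneq (y i 0) 0; last first.
  by have /eqP := hterm i; rewrite mulf_eq0 (negbTE yin0) orbF => /eqP.
apply/eqP; rewrite eq_le xp andbT.
rewrite ex mxE; apply: sumr_le0 => k _.
have [<-|nik] := eqVneq i k; first by rewrite yi0 mulr0.
by apply: mulr_le0_ge0 => //; apply: zA.
Qed.

End Aux.

Theorem mainTheorem10 (R : realType) (n : nat) (A : 'M[R]_n) :
  Zmatrix A -> range_monotone A ->
  (exists x : 'cV[R]_n, KM A x /\ x <> 0) ->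
  (exists X : 'M[R]_n, group_inverse A X) /\
  (forall X : 'M[R]_n, group_inverse A X -> karamardian X).
Proof.
move=> zA rm [x0 [[x0p [z ez]] x0n]]; subst x0.
split; first exact: (@gi_exists _ _ _ rm).
move=> X gi; split.
  exists (A *m z); split; last exact: x0n.
  split; first exact: x0p.
  case: gi => h1 h2 h3.
  exists (A *m A *m z); by rewrite !mulmxA -h3 h1.
exists (const_mx 1); split.
- exists (const_mx 1), 0; split.
  + by move=> i; rewrite mxE ltr01.
  + by rewrite /in_null mulmx0.
  + by rewrite addr0.
- apply: (@lcp_zero _ _ _ _ _ zA rm gi) => i; by rewrite mxE.
- apply: (@lcp_zero _ _ _ _ _ zA rm gi) => i; by rewrite mxE ler01.
Qed.
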